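(* Let $D\ge1$, let $\rho_X^G$ and $\rho_Y^G$ be any two independent $D$-mode bosonic Gaussian states, and let $\tau\in(0,1)$. Then for every order $p>1$ and every power $\kappa\ge\frac{p+1}{2}$, \[ \big(\mathbf{V}_p(\rho_X^G\boxplus_\tau\rho_Y^G)\big)^{\kappa}\ \ge\ \tau^\kappa\big(\mathbf{V}_p(\rho_X^G)\big)^{\kappa}+(1-\tau)^\kappa\big(\mathbf{V}_p(\rho_Y^G)\big)^{\kappa}, \] equivalently $\exp\!\big(\frac{\kappa}{D}S_p(\rho_X^G\boxplus_\tau\rho_Y^G)\big)\ge\tau^\kappa\exp\!\big(\frac{\kappa}{D}S_p(\rho_X^G)\big)+(1-\tau)^\kappa\exp\!\big(\frac{\kappa}{D}S_p(\rho_Y^G)\big)$.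
   Context: To each $D$-mode bosonic state $\rho_X$ one associates a quasi-probability distribution $q_X$ on phase space $\mathbb{C}^D$ (e.g. the Wigner function; normalized to total integral $1$ but possibly non-positive). The quantum (differential) Rényi entropy of order $p>0$, $p\neq1$, is $S_p(\rho_X)=\frac{1}{1-p}\log\int_{\mathbb{C}^D}q_X(z)^p\,dz$, and the quantum Rényi entropy power is $\mathbf{V}_p(\rho_X)=\exp\big(\frac{1}{D}S_p(\rho_X)\big)$. The quantum convolution ($\tau$-beam-splitter) is $\rho_X\boxplus_\tau\rho_Y=\mathrm{Tr}_Y[U_\tau(\rho_X\otimes\rho_Y)U_\tau^\dagger]$ with $U_\tau$ the Gaussian beam-splitter unitary acting on annihilation operators as $\hat a_Z=\sqrt{\tau}\,\hat a_X+\sqrt{1-\tau}\,\hat a_Y$; at the level of quasi-probability distributions the output $\rho_Z=\rho_X\boxplus_\tau\rho_Y$ has $q_Z(z')=\frac{1}{\tau}\int_{\mathbb{C}^D}q_X(z)\,q_Y\!\left(\frac{z'-\sqrt{1-\tau}\,z}{\sqrt{\tau}}\right)dz$ for $z'\in\mathbb{C}^D$. *)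

(* Defs.v *)
From HB Require Import structures.
From mathcomp Require Import all_boot all_order all_algebra.
From mathcomp Require Import all_classical all_reals all_analysis.
Set Implicit Arguments. Unset Strict Implicit. Unset Printing Implicit Defensive.
Import Order.TTheory GRing.Theory Num.Theory.
Local Open Scope ring_scope.

(* Phase space C^D is identified with R^(2D) = 'rV[R]_(2*D), with real
   quadrature coordinates r = (x_1..x_D, p_1..p_D). *)

(* Lebesgue integral over R^n, as an iterated integral of one-dimensional
   Lebesgue integrals (no n-dimensional Lebesgue measure in the library). *)
Fixpoint integral_Rn {R : realType} (n : nat) : ('rV[R]_n -> \bar R) -> \bar R :=
  match n return ('rV[R]_n -> \bar R) -> \bar R with
  | 0 => fun f => f 0
  | n'.+1 => fun f =>
      (\int[@lebesgue_measure R]_(x in [set: R])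
         integral_Rn (fun v : 'rV[R]_n' =>
            f (row_mx (const_mx x : 'rV[R]_1) v)))%E
  end.

Definition symplectic {R : realType} (D : nat) : 'M[R]_(D + D) :=
  block_mx 0 1%:M (- 1%:M) 0.

Definition bilin {R : realType} n (u : 'rV[R]_n) (A : 'M[R]_n) (v : 'rV[R]_n) : R :=
  (u *m A *m v^T) 0 0.

(* V is the covariance matrix of a bona fide D-mode Gaussian state:
   V symmetric and V + (i/2) Omega >= 0 (uncertainty principle, convention
   with vacuum covariance I/2).  Positivity of the Hermitian form
   (u - i v)^T (V + (i/2) Omega) (u + i v) for all real u, v unfolds to
   u^T V u + v^T V v - u^T Omega v >= 0. *)
Definition gaussian_cov {R : realType} (D : nat) (V : 'M[R]_(D + D)) : Prop :=
  V^T = V /\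
  forall u v : 'rV[R]_(D + D),
    0 <= bilin u V u + bilin v V v - bilin u (symplectic D) v.

Definition gauss_wigner {R : realType} (D : nat) (m : 'rV[R]_(D + D))
  (V : 'M[R]_(D + D)) (r : 'rV[R]_(D + D)) : R :=
  expR (- (bilin (r - m) (invmx V) (r - m)) / 2)
  / Num.sqrt ((2 * pi) ^+ (D + D) * \det V).

Definition renyi_entropy {R : realType} (D : nat) (p : R)
  (q : 'rV[R]_(D + D) -> R) : R :=
  (1 - p)^-1 * ln (fine (integral_Rn (fun z => (q z `^ p)%:E))).

Definition renyi_power {R : realType} (D : nat) (p : R)
  (q : 'rV[R]_(D + D) -> R) : R :=
  expR (renyi_entropy p q / D%:R).

(* Quasi-probability distribution of rho_X [+]_tau rho_Y, the output of the
   beam splitter a_Z = sqrt tau a_X + sqrt(1-tau) a_Y with Y traced out,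
   i.e. the density of sqrt(tau) X + sqrt(1-tau) Y:
   q_Z(z') = tau^{-D} \int q_X((z' - sqrt(1-tau) z)/sqrt tau) q_Y(z) dz
   (real dimension 2D, Jacobian tau^{-D}). *)
Definition quantum_conv {R : realType} (D : nat) (tau : R)
  (qX qY : 'rV[R]_(D + D) -> R) (z' : 'rV[R]_(D + D)) : R :=
  (tau ^+ D)^-1 *
  fine (integral_Rn (fun z =>
     (qX ((Num.sqrt tau)^-1 *: (z' - Num.sqrt (1 - tau) *: z)) * qY z)%:E)).

(* Main.v *)
Require Import Defs.
From HB Require Import structures.
From mathcomp Require Import all_boot all_order all_algebra.
From mathcomp Require Import all_classical all_reals all_analysis.
From mathcomp Require Import ring lra.
Import Order.TTheory GRing.Theory Num.Theory.
Local Open Scope ring_scope.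
Set Implicit Arguments. Unset Strict Implicit. Unset Printing Implicit Defensive.
Section Alg.
Variable R : realType.

Lemma bilinDl n (u1 u2 v : 'rV[R]_n) A : bilin (u1 + u2) A v = bilin u1 A v + bilin u2 A v.
Proof. by rewrite /bilin !mulmxDl mxE. Qed.
Lemma bilinDr n (u v1 v2 : 'rV[R]_n) A : bilin u A (v1 + v2) = bilin u A v1 + bilin u A v2.
Proof. by rewrite /bilin linearD /= mulmxDr mxE. Qed.
Lemma bilinZl n (u v : 'rV[R]_n) A a : bilin (a *: u) A v = a * bilin u A v.
Proof. by rewrite /bilin -!scalemxAl mxE. Qed.
Lemma bilinZr n (u v : 'rV[R]_n) A a : bilin u A (a *: v) = a * bilin u A v.
Proof. by rewrite /bilin linearZ /= -scalemxAr mxE. Qed.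
Lemma bilinNl n (u v : 'rV[R]_n) A : bilin (- u) A v = - bilin u A v.
Proof. by rewrite -scaleN1r bilinZl mulN1r. Qed.
Lemma bilinNr n (u v : 'rV[R]_n) A : bilin u A (- v) = - bilin u A v.
Proof. by rewrite -scaleN1r bilinZr mulN1r. Qed.
Lemma bilinDm n (u v : 'rV[R]_n) A B : bilin u (A + B) v = bilin u A v + bilin u B v.
Proof. by rewrite /bilin mulmxDr mulmxDl mxE. Qed.
Lemma bilinZm n (u v : 'rV[R]_n) A a : bilin u (a *: A) v = a * bilin u A v.
Proof. by rewrite /bilin -scalemxAr -scalemxAl mxE. Qed.
Lemma bilin_sym n (u v : 'rV[R]_n) A : A^T = A -> bilin u A v = bilin v A u.
Proof.
move=> hA; have e : (u *m A *m v^T)^T = v *m A *m u^T.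
  by rewrite !trmx_mul trmxK hA mulmxA.
by rewrite /bilin -e [RHS]mxE.
Qed.
Lemma bilin0l n (v : 'rV[R]_n) A : bilin 0 A v = 0.
Proof. by rewrite /bilin !mul0mx mxE. Qed.

Definition PD n (A : 'M[R]_n) :=
  A^T = A /\ forall z : 'rV_n, z != 0 -> 0 < bilin z A z.

Lemma const_mx11 (x : R) : (const_mx x : 'M[R]_1) = x%:M.
Proof. by apply/matrixP => i j; rewrite !ord1 !mxE. Qed.

Section Schur.
Variable n : nat.
Variable A : 'M[R]_(1 + n).

Definition schur_y : 'rV[R]_n := - (ursubmx A *m invmx (drsubmx A)).
Definition schur_v : 'rV[R]_(1 + n) := row_mx (const_mx 1) schur_y.
Definition schur_s : R := bilin schur_v A schur_v.

Hypothesis hA : A^T = A.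
Hypothesis hC : drsubmx A \in unitmx.

Lemma schur_vA : schur_v *m A = row_mx (ulsubmx A + schur_y *m dlsubmx A) 0.
Proof.
rewrite -{1}[A]submxK /schur_v mul_row_block const_mx11 !mul1mx; congr row_mx.
by rewrite /schur_y mulNmx -mulmxA mulVmx // mulmx1 subrr.
Qed.

Lemma schur_cross (v : 'rV[R]_n) : bilin schur_v A (row_mx 0 v) = 0.
Proof. by rewrite /bilin schur_vA tr_row_mx mul_row_col trmx0 mulmx0 mul0mx addr0 mxE. Qed.

Lemma bilin_row0 (v : 'rV[R]_n) : bilin (row_mx 0 v) A (row_mx 0 v) = bilin v (drsubmx A) v.
Proof.
by rewrite /bilin -{1}[A]submxK mul_row_block !mul0mx !add0r tr_row_mx mul_row_col trmx0 mulmx0 add0r.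
Qed.

Lemma schur_decomp (x : R) (u : 'rV[R]_n) :
  bilin (row_mx (const_mx x) u) A (row_mx (const_mx x) u) =
  schur_s * x ^+ 2 + bilin (u - x *: schur_y) (drsubmx A) (u - x *: schur_y).
Proof.
have e : row_mx (const_mx x) u = x *: schur_v + row_mx 0 (u - x *: schur_y).
  rewrite /schur_v scale_row_mx add_row_mx addr0 addrC subrK; congr row_mx.
  by apply/matrixP => i j; rewrite !mxE mulr1.
have -> : bilin (u - x *: schur_y) (drsubmx A) (u - x *: schur_y) =
   bilin (row_mx 0 (u - x *: schur_y)) A (row_mx 0 (u - x *: schur_y)) by rewrite bilin_row0.
rewrite e; set w := row_mx 0 _.
rewrite bilinDl !bilinDr !bilinZl !bilinZr schur_cross (bilin_sym _ _ hA) schur_cross.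
by rewrite !mulr0 !addr0 add0r mulrA -expr2 mulrC.
Qed.

Lemma schur_det : \det A = schur_s * \det (drsubmx A).
Proof.
pose P : 'M[R]_(1 + n) := block_mx 1%:M schur_y 0 1%:M.
have dP : \det P = 1 by rewrite det_ublock !det1 mulr1.
have e : P *m A *m P^T = block_mx (ulsubmx A + schur_y *m dlsubmx A) 0
             (dlsubmx A + drsubmx A *m schur_y^T) (drsubmx A).
  have wy0 : ursubmx A + schur_y *m drsubmx A = 0.
    by rewrite /schur_y mulNmx -mulmxA mulVmx // mulmx1 subrr.
  rewrite -{1}[A]submxK mulmx_block tr_block_mx trmx0 mulmx_block.
  rewrite !mul1mx !mul0mx !add0r wy0 !mul0mx !addr0 tr_scalar_mx !mulmx1.
  by rewrite !mulmx0 add0r trmx1 mulmx1.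
have := congr1 determinant e.
rewrite !det_mulmx det_tr dP mul1r mulr1 det_lblock => ->; congr (_ * _).
rewrite det_mx11 /schur_s /bilin schur_vA /schur_v tr_row_mx mul_row_col mul0mx addr0.
by rewrite const_mx11 tr_scalar_mx mulmx1.
Qed.

End Schur.

Lemma PD_sub n (A : 'M[R]_(1 + n)) : PD A -> PD (drsubmx A).
Proof.
case=> hA hp; split; first by rewrite trmx_drsub hA.
move=> z z0; rewrite -bilin_row0; apply: hp.
by rewrite row_mx_eq0 negb_and z0 orbT.
Qed.

Lemma schur_v_neq0 n (A : 'M[R]_(1 + n)) : schur_v A != 0.
Proof.
rewrite /schur_v row_mx_eq0 negb_and; apply/orP; left.
apply/eqP => /matrixP /(_ 0 0); rewrite !mxE => /eqP; by rewrite oner_eq0.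
Qed.

Lemma PD_det_gt0 n (A : 'M[R]_n) : PD A -> 0 < \det A.
Proof.
elim: n A => [|n IH] A hPD; first by rewrite det_mx00 ltr01.
have hPD' : PD (A : 'M[R]_(1 + n)) by [].
have hC := IH _ (PD_sub hPD').
have hCu : drsubmx (A : 'M[R]_(1 + n)) \in unitmx by rewrite unitmxE unitfE gt_eqF.
rewrite (schur_det hCu) mulr_gt0 //.
exact: hPD.2 _ (schur_v_neq0 _).
Qed.

End Alg.
Section Ineq.
Variable R : realType.

Lemma amgm (x y t : R) : 0 <= x -> 0 <= y -> 0 < t -> t < 1 ->
  x `^ t * y `^ (1 - t) <= t * x + (1 - t) * y.
Proof.
move=> x0 y0 t0 t1.
have t1' : 0 < 1 - t by rewrite subr_gt0.
have := @conjugate_powR R (x `^ t) (y `^ (1 - t)) t^-1 (1 - t)^-1 (powR_ge0 _ _) (powR_ge0 _ _)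
  ltac:(by rewrite invr_gt0) ltac:(by rewrite invr_gt0).
rewrite !invrK addrC subrK => /(_ erefl).
rewrite -!powRrM !mulfV ?gt_eqF // !powRr1 //.
by rewrite [t * x]mulrC [(1 - t) * y]mulrC.
Qed.

Lemma holder2 (a1 a2 b1 b2 t : R) : 0 < a1 -> 0 < a2 -> 0 < b1 -> 0 < b2 -> 0 < t -> t < 1 ->
  a1 `^ t * b1 `^ (1 - t) + a2 `^ t * b2 `^ (1 - t) <= (a1 + a2) `^ t * (b1 + b2) `^ (1 - t).
Proof.
move=> a10 a20 b10 b20 t0 t1.
set Sa := a1 + a2; set Sb := b1 + b2.
have Sa0 : 0 < Sa by rewrite addr_gt0.
have Sb0 : 0 < Sb by rewrite addr_gt0.
have f : forall a (S : R) s, 0 < S -> 0 <= a -> a `^ s = S `^ s * (a / S) `^ s.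
  move=> a S s S0 a0; rewrite -powRM ?divr_ge0 ?(ltW S0) //.
  by rewrite mulrC divfK // gt_eqF.
rewrite (f a1 Sa t) ?(ltW a10) // (f a2 Sa t) ?(ltW a20) //.
rewrite (f b1 Sb (1 - t)) ?(ltW b10) // (f b2 Sb (1 - t)) ?(ltW b20) //.
set K := Sa `^ t * Sb `^ (1 - t).
have K0 : 0 <= K by rewrite mulr_ge0 // powR_ge0.
have h1 := amgm (divr_ge0 (ltW a10) (ltW Sa0)) (divr_ge0 (ltW b10) (ltW Sb0)) t0 t1.
have h2 := amgm (divr_ge0 (ltW a20) (ltW Sa0)) (divr_ge0 (ltW b20) (ltW Sb0)) t0 t1.
have hs : t * (a1 / Sa) + (1 - t) * (b1 / Sb) + (t * (a2 / Sa) + (1 - t) * (b2 / Sb)) = 1.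
  rewrite addrACA -!mulrDr -!mulrDl -/Sa -/Sb !divff ?gt_eqF // !mulr1.
  by rewrite addrCA subrr addr0.
have : (a1 / Sa) `^ t * (b1 / Sb) `^ (1 - t) + (a2 / Sa) `^ t * (b2 / Sb) `^ (1 - t) <= 1.
  by rewrite -[X in _ <= X]hs; exact: lerD h1 h2.
move=> h.
have e : Sa `^ t * (a1 / Sa) `^ t * (Sb `^ (1 - t) * (b1 / Sb) `^ (1 - t)) +
   Sa `^ t * (a2 / Sa) `^ t * (Sb `^ (1 - t) * (b2 / Sb) `^ (1 - t)) =
   K * ((a1 / Sa) `^ t * (b1 / Sb) `^ (1 - t) + (a2 / Sa) `^ t * (b2 / Sb) `^ (1 - t)).
  by rewrite /K; ring.
rewrite e -[X in _ <= X]mulr1.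
exact: ler_wpM2l.
Qed.

Lemma powR_superadd (a b k : R) : 0 <= a -> 0 <= b -> 1 <= k ->
  a `^ k + b `^ k <= (a + b) `^ k.
Proof.
move=> a0 b0 k1.
have k0 : 0 < k by apply: lt_le_trans k1.
rewrite -(mulr_powRB1 a0 k0) -(mulr_powRB1 b0 k0) -(mulr_powRB1 (addr_ge0 a0 b0) k0) mulrDl.
have k1' : 0 <= k - 1 by rewrite subr_ge0.
apply: lerD; apply: ler_wpM2l => //; apply: ge0_ler_powR => //;
  rewrite ?nnegrE ?addr_ge0 //.
- by rewrite lerDl.
- by rewrite lerDr.
Qed.

End Ineq.
Section Mink.
Variable R : realType.

Lemma PD_ge0 n (A : 'M[R]_n) : PD A -> forall z, 0 <= bilin z A z.
Proof.
case=> _ hp z; have [->|z0] := eqVneq z 0; first by rewrite bilin0l.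
exact/ltW/hp.
Qed.

Lemma PD_add n (A B : 'M[R]_n) : PD A -> PD B -> PD (A + B).
Proof.
case=> hA pA [hB pB]; split; first by rewrite linearD /= hA hB.
by move=> z z0; rewrite bilinDm addr_gt0 // ?pA ?pB.
Qed.

Lemma drsubmxD n (A B : 'M[R]_(1 + n)) : drsubmx (A + B) = drsubmx A + drsubmx B.
Proof. by apply/matrixP => i j; rewrite !mxE. Qed.

Lemma PD_unit_sub n (A : 'M[R]_(1 + n)) : PD A -> drsubmx A \in unitmx.
Proof. by move=> hA; rewrite unitmxE unitfE gt_eqF // (PD_det_gt0 (PD_sub hA)). Qed.

Lemma schur_s_gt0 n (A : 'M[R]_(1 + n)) : PD A -> 0 < schur_s A.
Proof. by move=> hA; apply: hA.2; exact: schur_v_neq0. Qed.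

Lemma schur_s_superadd n (A B : 'M[R]_(1 + n)) : PD A -> PD B ->
  schur_s A + schur_s B <= schur_s (A + B).
Proof.
move=> hA hB.
rewrite {3}/schur_s bilinDm /schur_v.
rewrite (schur_decomp hA.1 (PD_unit_sub hA)) (schur_decomp hB.1 (PD_unit_sub hB)).
rewrite expr1n !mulr1; apply: lerD; rewrite lerDl; exact: PD_ge0 (PD_sub _) _.
Qed.

Lemma det_schur_pow n (A : 'M[R]_(1 + n.+1)) : PD A ->
  \det A `^ (n.+2%:R)^-1 =
  schur_s A `^ (n.+2%:R)^-1 * (\det (drsubmx A) `^ (n.+1%:R)^-1) `^ (1 - (n.+2%:R)^-1).
Proof.
move=> hA; have s0 := schur_s_gt0 hA; have d0 := PD_det_gt0 (PD_sub hA).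
rewrite (schur_det (PD_unit_sub hA)) powRM ?ltW //.
rewrite -powRrM; congr (_ * _ `^ _).
have h1 : (n.+1%:R : R) != 0 by rewrite pnatr_eq0.
have h2 : (n.+2%:R : R) != 0 by rewrite pnatr_eq0.
field; apply/andP; split; rewrite -?(natrD R 1 n) -?(natrD R 2 n) pnatr_eq0 //.
Qed.

Lemma minkowski n (A B : 'M[R]_n.+1) : PD A -> PD B ->
  \det A `^ (n.+1%:R)^-1 + \det B `^ (n.+1%:R)^-1 <= \det (A + B) `^ (n.+1%:R)^-1.
Proof.
elim: n A B => [|n IH] A B hA hB.
  have := PD_det_gt0 hA; have := PD_det_gt0 hB; rewrite !det_mx11 => hb ha.
  by rewrite mxE mulr1n invr1 !powRr1 ?addr_ge0 ?(ltW ha) ?(ltW hb).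
have hA' : PD (A : 'M[R]_(1 + n.+1)) by [].
have hB' : PD (B : 'M[R]_(1 + n.+1)) by [].
rewrite (det_schur_pow hA') (det_schur_pow hB') (det_schur_pow (PD_add hA' hB')).
set t := (n.+2%:R)^-1.
have t0 : 0 < t by rewrite invr_gt0 ltr0n.
have t1 : t < 1 by rewrite invf_lt1 ?ltr0n // ltr1n.
apply: le_trans (holder2 _ _ _ _ t0 t1) _.
- exact: schur_s_gt0.
- exact: schur_s_gt0.
- by apply: powR_gt0; apply: PD_det_gt0; apply: PD_sub.
- by apply: powR_gt0; apply: PD_det_gt0; apply: PD_sub.
have sA := schur_s_gt0 hA'; have sB := schur_s_gt0 hB'.
have sAB := schur_s_gt0 (PD_add hA' hB').
apply: ler_pM; rewrite ?powR_ge0 //.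
- apply: ge0_ler_powR; [exact: ltW t0 | rewrite nnegrE; exact: addr_ge0 (ltW sA) (ltW sB)
  | rewrite nnegrE; exact: ltW sAB | exact: schur_s_superadd hA' hB'].
- apply: ge0_ler_powR; [by rewrite subr_ge0 ltW | by rewrite nnegrE addr_ge0 ?powR_ge0
  | by rewrite nnegrE powR_ge0 | ].
  rewrite drsubmxD; exact: IH (PD_sub hA') (PD_sub hB').
Qed.

End Mink.
Section Gauss.
Variable R : realType.
Local Open Scope ring_scope.

Lemma gauss1 (K s mu : R) : 0 < s ->
  (\int[@lebesgue_measure R]_(x in [set: R]) (K * expR (- (s * (x - mu) ^+ 2) / 2))%:E)%E =
  (K * Num.sqrt (2 * pi / s))%:E.
Proof.
move=> s0.
set sg := (Num.sqrt s)^-1.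
have sg0 : sg != 0 by rewrite invr_eq0 gt_eqF // sqrtr_gt0.
have sg2 : sg ^+ 2 = s^-1 by rewrite exprVn sqr_sqrtr // ltW.
have hp : normal_peak sg != 0 by rewrite gt_eqF // normal_peak_gt0.
have e : forall x, K * expR (- (s * (x - mu) ^+ 2) / 2) = (K / normal_peak sg) * normal_pdf mu sg x.
  move=> x; rewrite normal_pdfE // /normal_fun -mulrA mulKf //; congr (K * expR _).
  rewrite sg2; field; by rewrite gt_eqF.
under eq_integral => x _ do rewrite e EFinM.
rewrite integralZl //=; last exact: integrable_normal_pdf.
rewrite integral_normal_pdf mule1 /normal_peak invrK sg2; congr (K * Num.sqrt _)%:E.
rewrite -mulr_natr; field; by rewrite gt_eqF.
Qed.

End Gauss.
Section GaussN.
Variable R : realType.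
Local Open Scope ring_scope.

Lemma integral_Rn_S n (f : 'rV[R]_n.+1 -> \bar R) : integral_Rn f =
  (\int[@lebesgue_measure R]_(x in [set: R])
      integral_Rn (fun v : 'rV[R]_n => f (row_mx (const_mx x : 'rV[R]_1) v)))%E.
Proof. by []. Qed.

Lemma row_sub_const n (x : R) (v : 'rV[R]_n) (m : 'rV[R]_(1 + n)) :
  row_mx (const_mx x : 'rV[R]_1) v - m = row_mx (const_mx (x - lsubmx m 0 0)) (v - rsubmx m).
Proof.
rewrite -{1}[m]hsubmxK opp_row_mx add_row_mx; congr row_mx.
by apply/matrixP => i j; rewrite !ord1 !mxE.
Qed.

Lemma gauss_int n (A : 'M[R]_n) (m : 'rV[R]_n) (k : R) : PD A ->
  integral_Rn (fun z => (k * expR (- bilin (z - m) A (z - m) / 2))%:E) =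
  (k * Num.sqrt ((2 * pi) ^+ n / \det A))%:E.
Proof.
elim: n A m k => [|n IH] A m k hA.
  rewrite /= /bilin mxE big_ord0 oppr0 mul0r expR0 mulr1 expr0 det_mx00 divr1 sqrtr1.
  by rewrite mulr1.
have hA' : PD (A : 'M[R]_(1 + n)) by [].
have hC := PD_sub hA'.
have hCu := PD_unit_sub hA'.
have s0 := schur_s_gt0 hA'.
have dC := PD_det_gt0 hC.
rewrite integral_Rn_S.
have inner : forall x : R,
  integral_Rn (fun v : 'rV[R]_n => (k * expR (- bilin (row_mx (const_mx x : 'rV[R]_1) v - m) A
       (row_mx (const_mx x : 'rV[R]_1) v - m) / 2))%:E) =
  ((k * Num.sqrt ((2 * pi) ^+ n / \det (drsubmx (A : 'M[R]_(1 + n))))) *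
     expR (- (schur_s (A : 'M[R]_(1 + n)) * (x - lsubmx (m : 'rV[R]_(1 + n)) 0 0) ^+ 2) / 2))%:E.
  move=> x.
  have -> : (fun v : 'rV[R]_n => (k * expR (- bilin (row_mx (const_mx x : 'rV[R]_1) v - m) A
       (row_mx (const_mx x : 'rV[R]_1) v - m) / 2))%:E) =
     (fun v => ((k * expR (- (schur_s (A : 'M[R]_(1 + n)) * (x - lsubmx (m : 'rV[R]_(1 + n)) 0 0) ^+ 2) / 2))
        * expR (- bilin (v - (rsubmx (m : 'rV[R]_(1 + n)) + (x - lsubmx (m : 'rV[R]_(1 + n)) 0 0) *: schur_y (A : 'M[R]_(1 + n))))
             (drsubmx (A : 'M[R]_(1 + n)))
             (v - (rsubmx (m : 'rV[R]_(1 + n)) + (x - lsubmx (m : 'rV[R]_(1 + n)) 0 0) *: schur_y (A : 'M[R]_(1 + n)))) / 2))%:E).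
    apply/funext => v; rewrite (@row_sub_const n x v m) (schur_decomp hA'.1 hCu).
    rewrite -mulrA -expRD [in RHS]opprD [in RHS]addrA.
    by rewrite opprD mulrDl.
  by rewrite IH // mulrAC.
under eq_integral => x _ do rewrite inner.
rewrite gauss1 //; congr EFin.
rewrite -mulrA -sqrtrM; last by rewrite divr_ge0 // ?exprn_ge0 ?mulr_ge0 ?pi_ge0 // ltW.
rewrite (schur_det hCu) exprS; congr (k * Num.sqrt _).
field; by rewrite !gt_eqF.
Qed.

End GaussN.
Section Cov.
Variable R : realType.
Local Open Scope ring_scope.

Lemma symp_tr D : symplectic D *m (symplectic D)^T = 1%:M :> 'M[R]_(D + D).
Proof.
rewrite /symplectic tr_block_mx !trmx0 linearN /= trmx1 mulmx_block.
rewrite !mul0mx !mulmx0 !addr0 !add0r !mul1mx mulNmx mulmxN opprK mul1mx.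
by rewrite -scalar_mx_block.
Qed.

Lemma uuT_gt0 n (u : 'rV[R]_n) : u != 0 -> 0 < (u *m u^T) 0 0.
Proof.
move=> u0; rewrite mxE lt_def sumr_ge0 ?andbT; last by move=> i _; rewrite mxE -expr2 sqr_ge0.
apply/eqP => hs; move/eqP: u0; apply; apply/matrixP => i j.
have hge : forall k : 'I_n, true -> 0 <= u 0 k * u^T k 0 by move=> k _; rewrite mxE -expr2 sqr_ge0.
have := psumr_eq0P hge hs. move=> /(_ j isT).
rewrite mxE ord1 !mxE => /eqP; rewrite mulf_eq0 orbb => /eqP ->.
by [].
Qed.

Lemma aux_contra (a x y tc tt : R) : a <= 0 -> x <= y -> y = tc - tt -> 0 < tt -> 0 <= a + x - tc -> False.
Proof. move=> *; lra. Qed.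

Lemma cov_PD D (V : 'M[R]_(D + D)) : gaussian_cov V -> PD V.
Proof.
case=> hV hU; split => // u u0.
rewrite ltNge; apply/negP => ha.
set a := bilin u V u in ha.
set B := bilin (u *m symplectic D) V (u *m symplectic D).
set c := (u *m u^T) 0 0.
have c0 : 0 < c := uuT_gt0 u0.
set t := c / (`|B| + 1).
have t0 : 0 < t by rewrite divr_gt0 // ltr_pwDr // normr_ge0.
have ht : t * (`|B| + 1) = c by rewrite /t divfK // gt_eqF // ltr_pwDr.
have hc : bilin u (symplectic D) (t *: (u *m symplectic D)) = t * c.
  by rewrite bilinZr /bilin trmx_mul mulmxA -(mulmxA u) symp_tr mulmx1.
have := hU u (t *: (u *m symplectic D)).
rewrite hc bilinZl bilinZr -/B => h.
have hB : B <= `|B| := ler_norm B.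
have h2 : t * t * B <= t * t * `|B| by rewrite ler_wpM2l // mulr_ge0 // ltW.
have e1 : t * t * `|B| = t * c - t * t by rewrite -ht; ring.
have tt0 : 0 < t * t by rewrite mulr_gt0.
have e2 : t * (t * B) = t * t * B by rewrite mulrA.
rewrite e2 in h; exact: (aux_contra ha h2 e1 tt0 h).
Qed.

Lemma PD_inv n (V : 'M[R]_n) : PD V -> PD (invmx V).
Proof.
move=> [hV hp]; have hu : V \in unitmx by rewrite unitmxE unitfE gt_eqF // PD_det_gt0.
split; first by rewrite trmx_inv hV.
move=> z z0.
have -> : bilin z (invmx V) z = bilin (z *m invmx V) V (z *m invmx V).
  by rewrite /bilin trmx_mul trmx_inv hV -(mulmxA z (invmx V) V) mulVmx // mulmx1 mulmxA.
apply: hp; apply: contra z0 => /eqP h.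
by rewrite -(mulmx1 z) -(mulVmx hu) mulmxA h mul0mx.
Qed.

Lemma PD_scale n (V : 'M[R]_n) (a : R) : 0 < a -> PD V -> PD (a *: V).
Proof.
move=> a0 [hV hp]; split; first by rewrite linearZ /= hV.
by move=> z z0; rewrite bilinZm mulr_gt0 // hp.
Qed.

Lemma PD_unit n (V : 'M[R]_n) : PD V -> V \in unitmx.
Proof. by move=> hV; rewrite unitmxE unitfE gt_eqF // PD_det_gt0. Qed.

End Cov.
Section Renyi.
Variable R : realType.
Local Open Scope ring_scope.

Lemma powR_invx (x p : R) : 0 <= x -> (x^-1) `^ p = (x `^ p)^-1.
Proof. by move=> x0; rewrite -powR_inv1 // -powRrM mulN1r powRN. Qed.

Lemma lnM' (x y : R) : 0 < x -> 0 < y -> ln (x * y) = ln x + ln y.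
Proof. by move=> hx hy; rewrite lnM // posrE. Qed.

Lemma lnV' (x : R) : 0 < x -> ln x^-1 = - ln x.
Proof. by move=> hx; rewrite lnV // posrE. Qed.

Lemma ln_sqrt (x : R) : 0 < x -> ln (Num.sqrt x) = ln x / 2.
Proof. by move=> hx; rewrite -powR12_sqrt ?ltW // ln_powR mulrC. Qed.

Definition gconst D (p : R) : R :=
  expR ((((1 - p) / 2) * ln ((2 * pi) ^+ (D + D)) - ln (p ^+ (D + D)) / 2) / ((1 - p) * D%:R)).

Lemma gconst_gt0 D p : 0 < gconst D p.
Proof. exact: expR_gt0. Qed.

Lemma gw_pow_integral D (m : 'rV[R]_(D + D)) V p : PD V -> 0 < p ->
  integral_Rn (fun z => (gauss_wigner m V z `^ p)%:E) =
  (((Num.sqrt ((2 * pi) ^+ (D + D) * \det V)) `^ p)^-1 *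
     Num.sqrt ((2 * pi) ^+ (D + D) / \det (p *: invmx V)))%:E.
Proof.
move=> hV p0.
rewrite -(gauss_int m _ (PD_scale p0 (PD_inv hV))).
congr integral_Rn; apply/funext => z; congr EFin.
rewrite /gauss_wigner powRM ?expR_ge0 ?invr_ge0 ?sqrtr_ge0 // powR_invx ?sqrtr_ge0 //.
rewrite mulrC -expRM bilinZm; congr (_ * expR _).
by rewrite mulrC mulrA mulrN mulNr.
Qed.

Lemma renyi_power_gauss D (m : 'rV[R]_(D + D)) V p : (1 <= D)%N -> PD V -> 1 < p ->
  renyi_power p (gauss_wigner m V) = gconst D p * \det V `^ ((D + D)%:R)^-1.
Proof.
move=> hD hV p1.
have p0 : 0 < p by apply: lt_trans p1.
have dV := PD_det_gt0 hV.
have pi0 : 0 < 2 * pi :> R by rewrite mulr_gt0 // pi_gt0.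
have a0 : 0 < (2 * pi) ^+ (D + D) :> R by rewrite exprn_gt0.
have b0 : 0 < p ^+ (D + D) by rewrite exprn_gt0.
rewrite /renyi_power /renyi_entropy gw_pow_integral // /=.
rewrite detZ det_inv.
rewrite lnM' ?invr_gt0 ?powR_gt0 ?sqrtr_gt0 ?mulr_gt0 ?divr_gt0 ?invr_gt0 //.
rewrite lnV' ?powR_gt0 ?sqrtr_gt0 ?mulr_gt0 // ln_powR !ln_sqrt ?mulr_gt0 ?divr_gt0 ?invr_gt0 //.
rewrite (lnM' a0 dV) (lnM' a0) ?invr_gt0 ?divr_gt0 // lnV' ?divr_gt0 // (lnM' b0) ?invr_gt0 // (lnV' dV).
rewrite /gconst /powR gt_eqF // -expRD; congr expR.
have hD0 : (D%:R : R) != 0 by rewrite pnatr_eq0 -lt0n.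
have hp1 : (1 - p) != 0 by rewrite subr_eq0 lt_eqF.
rewrite natrD; field.
  by rewrite hp1 hD0 -mulr2n mulrn_eq0 negb_or hD0.
all: by rewrite divr_gt0.
Qed.

End Renyi.
Section Conv.
Variable R : realType.
Local Open Scope ring_scope.

Lemma invmx_eq n (W X : 'M[R]_n) : X *m W = 1%:M -> invmx W = X.
Proof.
move=> h; have [_ hW] := mulmx1_unit h.
by rewrite -[invmx W]mul1mx -h -mulmxA mulmxV // mulmx1.
Qed.

Lemma bilin_mull n (a b : 'rV[R]_n) M N : bilin (a *m M) N b = bilin a (M *m N) b.
Proof. by rewrite /bilin !mulmxA. Qed.

Lemma pos_sqr_eq (x y : R) : 0 <= x -> 0 <= y -> x ^+ 2 = y ^+ 2 -> x = y.
Proof.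
move=> x0 y0 h; rewrite -(ger0_norm x0) -(ger0_norm y0) -!sqrtr_sqr.
by rewrite h.
Qed.

Section Fix.
Variables (D : nat) (mX mY : 'rV[R]_(D + D)) (VX VY : 'M[R]_(D + D)) (tau : R).
Hypotheses (hX : PD VX) (hY : PD VY) (t0 : 0 < tau) (t1 : tau < 1).

Let s := Num.sqrt tau.
Let c := Num.sqrt (1 - tau).
Let P := invmx VX.
Let Q := invmx VY.
Let al := (1 - tau) / tau.
Let G := al *: P + Q.
Let W := tau *: VX + (1 - tau) *: VY.
Let mu := s *: mX + c *: mY.

Let t1' : 0 < 1 - tau. Proof. by rewrite subr_gt0. Qed.
Let s0 : 0 < s. Proof. by rewrite sqrtr_gt0. Qed.
Let c0 : 0 < c. Proof. by rewrite sqrtr_gt0. Qed.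
Let s2 : s ^+ 2 = tau. Proof. by rewrite sqr_sqrtr // ltW. Qed.
Let c2 : c ^+ 2 = 1 - tau. Proof. by rewrite sqr_sqrtr // ltW. Qed.
Let al0 : 0 < al. Proof. by rewrite divr_gt0. Qed.
Let hP : PD P. Proof. exact: PD_inv. Qed.
Let hQ : PD Q. Proof. exact: PD_inv. Qed.
Let hG : PD G. Proof. exact: PD_add (PD_scale al0 hP) hQ. Qed.
Let hW : PD W. Proof. exact: PD_add (PD_scale t0 hX) (PD_scale t1' hY). Qed.
Let uX : VX \in unitmx. Proof. exact: PD_unit. Qed.
Let uY : VY \in unitmx. Proof. exact: PD_unit. Qed.
Let uG : G \in unitmx. Proof. exact: PD_unit. Qed.

Lemma W_fact : W = tau *: (VX *m G *m VY).
Proof.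
rewrite /W /G mulmxDr mulmxDl -scalemxAr /P mulmxV // -scalemxAl mul1mx.
rewrite -mulmxA /Q mulVmx // mulmx1 scalerDr scalerA.
by rewrite /al mulrC divfK ?gt_eqF // addrC.
Qed.

Lemma Wi_id : invmx W = tau^-1 *: (P - al *: (P *m invmx G *m P)).
Proof.
apply: invmx_eq.
have e1 : (P - al *: (P *m invmx G *m P)) *m VX = 1%:M - al *: (P *m invmx G).
  by rewrite mulmxBl -scalemxAl -!mulmxA /P mulVmx // !mulmx1.
have e2 : (1%:M - al *: (P *m invmx G)) *m G = G - al *: P.
  by rewrite mulmxBl mul1mx -scalemxAl -mulmxA mulVmx // mulmx1.
have e3 : G - al *: P = Q by rewrite /G addrC addKr.
rewrite W_fact -scalemxAl -scalemxAr scalerA mulVf ?gt_eqF // scale1r !mulmxA.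
by rewrite e1 e2 e3 /Q mulVmx.
Qed.

Lemma bilinNm n (u v : 'rV[R]_n) A : bilin u (- A) v = - bilin u A v.
Proof. by rewrite /bilin mulmxN mulNmx mxE. Qed.

Lemma scal_id (A1 A2 A3 A4 A5 : R) :
  s^-1 * (s^-1 * (A1 + - (c * A2) + (- (c * A2) + c * (c * A3)))) + A4 =
  al * A3 + A4 + - ((c / tau) * A2) + (- ((c / tau) * A2) + (c / tau) * ((c / tau) * A5))
  + tau^-1 * (A1 + - (al * A5)).
Proof.
rewrite /al -c2 -s2.
have : s != 0 by rewrite gt_eqF.
move=> hs; field; exact: hs.
Qed.

Lemma expo_id (z z' : 'rV[R]_(D + D)) :
  bilin (s^-1 *: (z' - c *: z) - mX) P (s^-1 *: (z' - c *: z) - mX) + bilin (z - mY) Q (z - mY) =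
  bilin (z - (mY + (c / tau) *: ((z' - mu) *m P *m invmx G))) G
        (z - (mY + (c / tau) *: ((z' - mu) *m P *m invmx G)))
  + bilin (z' - mu) (invmx W) (z' - mu).
Proof.
have e0 : s^-1 *: (z' - c *: z) - mX = s^-1 *: ((z' - mu) - c *: (z - mY)).
  apply/matrixP => i j; rewrite /mu !mxE.
  have : s != 0 by rewrite gt_eqF.
  by move=> hs; field.
have hy1 : forall u v, bilin ((c / tau) *: (u *m P *m invmx G)) G v = (c / tau) * bilin u P v.
  by move=> u v; rewrite bilinZl !bilin_mull mulVmx // mulmx1.
have hy1' : forall u, bilin ((c / tau) *: (u *m P *m invmx G)) P u =
    (c / tau) * bilin u (P *m invmx G *m P) u.
  by move=> u; rewrite bilinZl !bilin_mull mulmxA.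
have e3 : z - (mY + (c / tau) *: ((z' - mu) *m P *m invmx G)) =
   (z - mY) - (c / tau) *: ((z' - mu) *m P *m invmx G) by rewrite opprD addrA.
rewrite e0 e3 Wi_id.
move: (z' - mu) (z - mY) => u y.
have := hy1 u; have := hy1' u.
move: ((c / tau) *: (u *m P *m invmx G)) => y1 h1' h1.
rewrite !bilinZl !bilinZr !bilinDl !bilinDr !bilinNl !bilinNr !bilinZl !bilinZr.
rewrite (bilin_sym y y1 hG.1) (bilin_sym y u hP.1) !h1 (bilin_sym u y1 hP.1) h1'.
rewrite /G bilinDm bilinZm bilinZm bilinDm bilinNm bilinZm.
rewrite /al -c2 -s2.
have : s != 0 by rewrite gt_eqF.
by move=> hs; field.
Qed.

Lemma aux_exp (e1 e2 b cc : R) : e1 + e2 = b + cc -> - e1 / 2 + - e2 / 2 = - cc / 2 + - b / 2.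
Proof. move=> h; lra. Qed.

Lemma aux_frac (a b x y d e : R) : a * b = d * e -> a / x * (b / y) = d / (x * y) * e.
Proof. by move=> h; rewrite mulrACA h invfM; ring. Qed.

Lemma conv_gauss :
  quantum_conv tau (gauss_wigner mX VX) (gauss_wigner mY VY) = gauss_wigner mu W.
Proof.
apply/funext => z'; rewrite /quantum_conv.
set NX := Num.sqrt ((2 * pi) ^+ (D + D) * \det VX).
set NY := Num.sqrt ((2 * pi) ^+ (D + D) * \det VY).
set e := expR (- bilin (z' - mu) (invmx W) (z' - mu) / 2).
have -> : integral_Rn (fun z => (gauss_wigner mX VX ((Num.sqrt tau)^-1 *: (z' - Num.sqrt (1 - tau) *: z))
     * gauss_wigner mY VY z)%:E) =
   ((e / (NX * NY)) * Num.sqrt ((2 * pi) ^+ (D + D) / \det G))%:E.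
  rewrite -(gauss_int (mY + (c / tau) *: ((z' - mu) *m P *m invmx G)) _ hG).
  congr integral_Rn; apply/funext => z; congr EFin.
  rewrite /gauss_wigner; apply: aux_frac.
  rewrite -!expRD; congr expR; apply: aux_exp.
  exact: expo_id.
rewrite /= /gauss_wigner -/e.
have pi0 : 0 < 2 * pi :> R by rewrite mulr_gt0 // pi_gt0.
have a0 : 0 < (2 * pi) ^+ (D + D) :> R by rewrite exprn_gt0.
have dX := PD_det_gt0 hX; have dY := PD_det_gt0 hY; have dG := PD_det_gt0 hG.
have hK : (tau ^+ D)^-1 * ((NX * NY)^-1 * Num.sqrt ((2 * pi) ^+ (D + D) / \det G)) =
   (Num.sqrt ((2 * pi) ^+ (D + D) * \det W))^-1.
  apply: pos_sqr_eq.
  - by rewrite mulr_ge0 ?invr_ge0 ?exprn_ge0 ?(ltW t0) // mulr_ge0 ?invr_ge0 ?sqrtr_ge0 // mulr_ge0 ?sqrtr_ge0.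
  - by rewrite invr_ge0 sqrtr_ge0.
  rewrite W_fact detZ !det_mulmx /NX /NY.
  move: a0; set a := (2 * pi) ^+ (D + D) => a0.
  rewrite exprD; move: (exprn_gt0 D t0); set T := tau ^+ D => T0.
  rewrite !exprMn !exprVn !exprMn !sqr_sqrtr ?mulr_ge0 ?divr_ge0 ?(ltW a0) ?(ltW dX) ?(ltW dY) ?(ltW dG) ?(ltW T0) //.
  field; by rewrite !gt_eqF.
  by rewrite invr_ge0 ltW.
rewrite -hK; ring.
Qed.

End Fix.
End Conv.
Theorem theorem2 (R : realType) (D : nat) (hD : (1 <= D)%N)
  (mX mY : 'rV[R]_(D + D)) (VX VY : 'M[R]_(D + D))
  (hX : gaussian_cov VX) (hY : gaussian_cov VY)
  (tau : R) (htau0 : 0 < tau) (htau1 : tau < 1)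
  (p : R) (hp : 1 < p) (kappa : R) (hkappa : (p + 1) / 2 <= kappa) :
  (renyi_power p (quantum_conv tau (gauss_wigner mX VX) (gauss_wigner mY VY)))
    `^ kappa >=
  tau `^ kappa * (renyi_power p (gauss_wigner mX VX)) `^ kappa
  + (1 - tau) `^ kappa * (renyi_power p (gauss_wigner mY VY)) `^ kappa.
Proof.
have [D' eD] : exists D', D = D'.+1 by exists D.-1; rewrite prednK.
subst D.
have hVX := cov_PD hX; have hVY := cov_PD hY.
have t1' : 0 < 1 - tau by rewrite subr_gt0.
have k1 : 1 <= kappa by apply: le_trans hkappa; rewrite ler_pdivlMr // mul1r; lra.
have k0 : 0 <= kappa by apply: le_trans k1.
have hW : PD (tau *: VX + (1 - tau) *: VY).
  exact: PD_add (PD_scale htau0 hVX) (PD_scale t1' hVY).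
rewrite (conv_gauss mX mY hVX hVY htau0 htau1).
rewrite !(renyi_power_gauss _ (isT : (1 <= D'.+1)%N) _ hp) //.
set r := ((D'.+1 + D'.+1)%:R : R)^-1.
set g := gconst D'.+1 p.
have g0 : 0 <= g by exact/ltW/gconst_gt0.
have dX := PD_det_gt0 hVX; have dY := PD_det_gt0 hVY; have dW := PD_det_gt0 hW.
rewrite !powRM ?powR_ge0 //.
have Mk : \det (tau *: VX) `^ r + \det ((1 - tau) *: VY) `^ r <=
          \det (tau *: VX + (1 - tau) *: VY) `^ r :=
  @minkowski R (D' + D'.+1) (tau *: VX) ((1 - tau) *: VY) (PD_scale htau0 hVX) (PD_scale t1' hVY).
have sc : forall (a : R) (V : 'M[R]_(D'.+1 + D'.+1)), 0 < a -> PD V ->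
    \det (a *: V) `^ r = a * \det V `^ r.
  move=> a V a0 hV; rewrite detZ powRM ?exprn_ge0 ?ltW ?PD_det_gt0 //.
  rewrite -powR_mulrn ?ltW // -powRrM /r mulfV ?powRr1 ?ltW // pnatr_eq0.
rewrite (sc _ _ htau0 hVX) (sc _ _ t1' hVY) in Mk.
rewrite mulrCA [(1 - tau) `^ kappa * _]mulrCA -mulrDr.
apply: ler_wpM2l; first exact: powR_ge0.
rewrite -!powRM ?powR_ge0 ?(ltW htau0) ?(ltW t1') //.
apply: le_trans (powR_superadd _ _ k1) _; rewrite ?mulr_ge0 ?powR_ge0 ?(ltW htau0) ?(ltW t1') //.
apply: ge0_ler_powR => //; rewrite nnegrE ?addr_ge0 ?mulr_ge0 ?powR_ge0 ?(ltW htau0) ?(ltW t1') //.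
Qed.
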